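(* Let $H\ge 1$ be an integer, $V$ a finite node set with root $r\in V$, and let $(x,l,g)\in\mathcal{P}$, where $\mathcal{P}$ is the polytope defined in the context. Let $v_1,v_2,\ldots,v_{H+1}$ be a directed walk with $H$ arcs (so $v_i\neq v_{i+1}$ for $1\le i\le H$; nodes may repeat otherwise) such that $v_1\neq r$. Then $$\sum_{i=1}^{H} x_{v_i,v_{i+1}}\le H-1.$$
   Context: Setting: $V$ is a finite set of nodes of a complete undirected graph, $r\in V$ is a root, and $H$ is the hop limit. For every ordered pair $(u,v)$ of distinct nodes of $V$ there is a real variable $x_{u,v}$ (arc variable), and for every $v\in V$ and $i\in\{0,\dots,H\}$ there are real variables $l_{v,i}$ (''position of $v$ is less than $i$'') and $g_{i,v}$ (''position of $v$ is greater than $i$''). The partial-ordering polytope $\mathcal{P}$ is the set of all $(x,l,g)$ satisfying: (P1) $l_{r,0}=g_{0,r}=0$; (P2) $l_{v,1}=g_{H,v}=0$ for all $v\in V\setminus\{r\}$; (P3) $l_{v,i}-l_{v,i+1}\le 0$ for all $v\in V$, $i=0,\dots,H-1$; (P4) $g_{i,v}+l_{v,i+1}=1$ for all $v\in V$, $i=0,\dots,H-1$; (P5) $l_{u,i}+g_{i,v}\ge x_{u,v}$ for all $u\in V$, $v\in V\setminus\{u\}$, $i=0,\dots,H$; (P6) $\sum_{u\in V\setminus\{v\}}x_{u,v}\le 1$ for all $v\in V$; (P7) $\sum_{u\in V\setminus\{v,w\}}x_{u,v}\ge x_{v,w}$ for all $v\in V\setminus\{r\}$, $w\in V\setminus\{v\}$;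 (P8) $0\le x_{u,v}\le 1$ for all arcs; (P9) $0\le l_{v,i},g_{i,v}\le 1$ for all $v,i$. *)

(* Defs.v *)
From HB Require Import structures.
From mathcomp Require Import all_boot all_order all_algebra.
Set Implicit Arguments. Unset Strict Implicit. Unset Printing Implicit Defensive.
Import Order.TTheory GRing.Theory Num.Theory.
Local Open Scope ring_scope.

(* The partial-ordering polytope P for node set V (a finType), root r,
   hop limit H.  x u v = x_{u,v} (only meaningful for u <> v),
   l v i = l_{v,i}, g i v = g_{i,v}, for i in {0,...,H}. *)
Definition in_P (R : realFieldType) (V : finType) (r : V) (H : nat)
  (x : V -> V -> R) (l : V -> nat -> R) (g : nat -> V -> R) : Prop :=
  (l r 0%N = 0 /\ g 0%N r = 0) /\
      (forall v, v != r -> l v 1%N = 0 /\ g H v = 0) /\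
      (forall v (i : nat), (i < H)%N -> l v i - l v i.+1 <= 0) /\
      (forall v (i : nat), (i < H)%N -> g i v + l v i.+1 = 1) /\
      (forall u v (i : nat), u != v -> (i <= H)%N -> l u i + g i v >= x u v) /\
      (forall v, \sum_(u | u != v) x u v <= 1) /\
      (forall v w, v != r -> w != v ->
                  \sum_(u | (u != v) && (u != w)) x u v >= x v w) /\
      (forall u v, u != v -> 0 <= x u v <= 1) /\
      (forall v (i : nat), (i <= H)%N ->
                  (0 <= l v i <= 1) /\ (0 <= g i v <= 1)).

(* Main.v *)
Require Import Defs.
From HB Require Import structures.
From mathcomp Require Import all_boot all_order all_algebra.
From mathcomp Require Import lra.
Import Order.TTheory GRing.Theory Num.Theory.
Local Open Scope ring_scope.

(* The walk v_1,...,v_{H+1} is encoded as w 0, ..., w H. *)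
Theorem theorem1 (R : realFieldType) (V : finType) (r : V) (H : nat)
  (x : V -> V -> R) (l : V -> nat -> R) (g : nat -> V -> R)
  (w : nat -> V) :
  (1 <= H)%N ->
  in_P r H x l g ->
  (forall i : nat, (i < H)%N -> w i != w i.+1) ->
  w 0%N != r ->
  \sum_(i < H) x (w i) (w i.+1) <= H%:R - 1.
Proof.
move=> H1 [[P1a P1b] [P2 [P3 [P4 [P5 [P6 [P7 [P8 P9]]]]]]]] Hw Hw0.
have key : forall n, (n < H)%N ->
  \sum_(i < n) x (w i) (w i.+1) <= n%:R - l (w n) n.+1.
  elim=> [|n IH] Hn.
    by rewrite big_ord0 (proj1 (P2 _ Hw0)) subr0.
  rewrite big_ord_recr /=.
  have IH' := IH (ltnW Hn).
  have h5 := P5 (w n) (w n.+1) n.+1 (Hw n (ltnW Hn)) (ltnW Hn).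
  have h4 := P4 (w n.+1) n.+1 Hn.
  have e : g n.+1 (w n.+1) = 1 - l (w n.+1) n.+2 by rewrite -h4 addrK.
  rewrite e in h5.
  rewrite -natr1.
  set S := \sum_(i < n) _ in IH' *.
  set X := x _ _ in h5 *.
  set A := l (w n) n.+1 in IH' h5.
  set B := l (w n.+1) n.+2 in h5 *.
  have : S + X <= n%:R - A + (A + (1 - B)) by apply: lerD.
  by move=> h; apply: (le_trans h); lra.
case: H H1 P2 P3 P4 P5 P8 P9 Hw key => // m _ P2 P3 P4 P5 P8 P9 Hw key.
rewrite big_ord_recr /=.
have k := key m (ltnSn m).
have hx : x (w m) (w m.+1) <= l (w m) m.+1.
  have nm := Hw m (ltnSn m).
  case: (eqVneq (w m.+1) r) => [Er|Nr].
    have wmr : w m != r by rewrite -Er.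
    have h0 := P5 (w m) (w m.+1) 0%N nm (leq0n _).
    rewrite Er P1b addr0 in h0.
    have hl := P3 (w m) 0%N (ltn0Sn m).
    rewrite (proj1 (P2 _ wmr)) subr0 in hl.
    have := proj1 (P9 (w m) m.+1 (leqnn _)); case/andP=> + _.
    by move=> h; rewrite Er; lra.
  have h := P5 (w m) (w m.+1) m.+1 nm (leqnn _).
  by rewrite (proj2 (P2 _ Nr)) addr0 in h.
have := lerD k hx.
rewrite -natr1; lra.
Qed.
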